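(* Let $A$ and $B$ be types. There is a map $W_{A,B}:A*B\to\Sigma A\vee\Sigma B$ such that \[\Sigma A\times\Sigma B\simeq \mathbf{1}\sqcup^{A*B}(\Sigma A\vee\Sigma B),\] where the pushout is along the unique map $A*B\to\mathbf{1}$ and $W_{A,B}$, and such that the induced map $\Sigma A\vee\Sigma B\to\Sigma A\times\Sigma B$ is the canonical one.
   Context: Homotopy type theory. $\Sigma A$ is the suspension of $A$ (higher inductive type with $\mathsf{north},\mathsf{south}:\Sigma A$ and $\operatorname{merid}:A\to\mathsf{north}=\mathsf{south}$), pointed by $\mathsf{north}$. For pointed types $X,Y$, the wedge $X\vee Y$ is the homotopy pushout of the basepoint maps $\mathbf{1}\to X$, $\mathbf{1}\to Y$; the canonical map $X\vee Y\to X\times Y$ sends $\operatorname{inl}(x)\mapsto(x,\star_Y)$, $\operatorname{inr}(y)\mapsto(\star_X,y)$. The join $A*B$ is the homotopy pushout of the projections $A\xleftarrow{\operatorname{fst}}A\times B\xrightarrow{\operatorname{snd}}B$. *)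

(* Defs.v *)
(* Identity types of HoTT are modelled by the Type-valued inductive [paths]
   (NOT Rocq's Prop-valued [eq], which is proof-irrelevant here).
   Higher inductive types are not primitive in Rocq, so homotopy pushouts are
   given as *structures*: a carrier with constructors and a dependent
   eliminator with (propositional) computation rules. *)

Inductive paths {A : Type} (a : A) : A -> Type :=
  idpath : paths a a.
Arguments idpath {A a}.

Definition inverse {A : Type} {x y : A} (p : paths x y) : paths y x :=
  match p in paths _ y' return paths y' x with idpath => idpath end.

Definition concat {A : Type} {x y z : A} (p : paths x y) (q : paths y z)
  : paths x z :=
  match q in paths _ z' return paths x z' with idpath => p end.

Definition transport {A : Type} (Q : A -> Type) {x y : A} (p : paths x y)
  (u : Q x) : Q y :=
  match p in paths _ y' return Q y' with idpath => u end.

Definition ap {A B : Type} (f : A -> B) {x y : A} (p : paths x y)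
  : paths (f x) (f y) :=
  match p in paths _ y' return paths (f x) (f y') with idpath => idpath end.

Definition apD {A : Type} {Q : A -> Type} (f : forall a, Q a) {x y : A}
  (p : paths x y) : paths (transport Q p (f x)) (f y) :=
  match p in paths _ y' return paths (transport Q p (f x)) (f y') with
  | idpath => idpath end.

Definition transport_const {A T : Type} {x y : A} (p : paths x y) (t : T)
  : paths (transport (fun _ => T) p t) t :=
  match p in paths _ y' return paths (transport (fun _ => T) p t) t with
  | idpath => idpath end.

Definition IsEquiv {X Y : Type} (e : X -> Y) : Type :=
  ({ g : Y -> X & forall x, paths (g (e x)) x }
   * { h : Y -> X & forall y, paths (e (h y)) y })%type.

Record Pushout {C X Y : Type} (f : C -> X) (g : C -> Y) := {
  po_carrier :> Type;
  po_inl : X -> po_carrier;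
  po_inr : Y -> po_carrier;
  po_glue : forall c, paths (po_inl (f c)) (po_inr (g c));
  po_ind : forall (Q : po_carrier -> Type)
             (l : forall x, Q (po_inl x)) (r : forall y, Q (po_inr y))
             (gl : forall c, paths (transport Q (po_glue c) (l (f c))) (r (g c))),
             forall p, Q p;
  po_ind_inl : forall Q l r gl x, paths (po_ind Q l r gl (po_inl x)) (l x);
  po_ind_inr : forall Q l r gl y, paths (po_ind Q l r gl (po_inr y)) (r y);
  po_ind_glue : forall Q l r gl c,
      paths (apD (po_ind Q l r gl) (po_glue c))
            (concat (ap (transport Q (po_glue c)) (po_ind_inl Q l r gl (f c)))
                    (concat (gl c) (inverse (po_ind_inr Q l r gl (g c)))))
}.
Arguments po_carrier {C X Y f g} _.
Arguments po_inl {C X Y f g} _ _.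
Arguments po_inr {C X Y f g} _ _.
Arguments po_glue {C X Y f g} _ _.
Arguments po_ind {C X Y f g} _ _ _ _ _ _.
Arguments po_ind_inl {C X Y f g} _ _ _ _ _ _.
Arguments po_ind_inr {C X Y f g} _ _ _ _ _ _.
Arguments po_ind_glue {C X Y f g} _ _ _ _ _ _.

Definition Susp (A : Type) := @Pushout A unit unit (fun _ => tt) (fun _ => tt).
Definition north {A : Type} (S : Susp A) : S := po_inl S tt.
Definition south {A : Type} (S : Susp A) : S := po_inr S tt.
Definition merid {A : Type} (S : Susp A) (a : A) : paths (north S) (south S) :=
  po_glue S a.

Definition Wedge (X : Type) (x0 : X) (Y : Type) (y0 : Y) :=
  @Pushout unit X Y (fun _ => x0) (fun _ => y0).

Definition wedge_to_prod {X : Type} {x0 : X} {Y : Type} {y0 : Y}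
  (V : Wedge X x0 Y y0) : V -> (X * Y)%type :=
  po_ind V (fun _ => (X * Y)%type) (fun x => (x, y0)) (fun y => (x0, y))
    (fun c => transport_const (po_glue V c) (x0, y0)).

Definition Join (A B : Type) := @Pushout (A * B) A B fst snd.

Definition happly {A : Type} {Q : A -> Type} {f g : forall a, Q a}
  (p : paths f g) : forall a, paths (f a) (g a) :=
  fun a => match p in paths _ g' return paths (f a) (g' a) with
           | idpath => idpath end.

Definition Funext : Type :=
  forall (A : Type) (Q : A -> Type) (f g : forall a, Q a),
    IsEquiv (@happly A Q f g).

(* Main.v *)
Require Import Defs.

Notation "p @ q" := (concat p q) (at level 20, left associativity).
Notation "p ⁻¹" := (inverse p) (at level 3, format "p '⁻¹'").
Notation "1" := idpath.

Definition concat_1p {A} {x y : A} (p : paths x y) : paths (1 @ p) p :=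
  match p with idpath => idpath end.
Definition concat_assoc {A} {x y z w : A} (p : paths x y) (q : paths y z) (r : paths z w)
  : paths (p @ (q @ r)) (p @ q @ r).
Proof. destruct r; reflexivity. Defined.
Definition concat_pV {A} {x y : A} (p : paths x y) : paths (p @ p⁻¹) 1.
Proof. destruct p; reflexivity. Defined.
Definition concat_Vp {A} {x y : A} (p : paths x y) : paths (p⁻¹ @ p) 1.
Proof. destruct p; reflexivity. Defined.
Definition inv_inv {A} {x y : A} (p : paths x y) : paths (p⁻¹)⁻¹ p.
Proof. destruct p; reflexivity. Defined.
Definition inv_pp {A} {x y z : A} (p : paths x y) (q : paths y z) : paths (p @ q)⁻¹ (q⁻¹ @ p⁻¹).
Proof. destruct q, p; reflexivity. Defined.
Definition ap_pp {A B} (f : A -> B) {x y z : A} (p : paths x y) (q : paths y z)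
  : paths (ap f (p @ q)) (ap f p @ ap f q).
Proof. destruct q; reflexivity. Defined.
Definition ap_V {A B} (f : A -> B) {x y : A} (p : paths x y) : paths (ap f p⁻¹) (ap f p)⁻¹.
Proof. destruct p; reflexivity. Defined.
Definition ap_compose {A B C} (f : A -> B) (g : B -> C) {x y : A} (p : paths x y)
  : paths (ap (fun a => g (f a)) p) (ap g (ap f p)).
Proof. destruct p; reflexivity. Defined.
Definition ap_idmap {A} {x y : A} (p : paths x y) : paths (ap (fun a => a) p) p.
Proof. destruct p; reflexivity. Defined.
Definition ap_const {A B} (c : B) {x y : A} (p : paths x y) : paths (ap (fun _ => c) p) 1.
Proof. destruct p; reflexivity. Defined.
Definition apD_const {A B} (f : A -> B) {x y : A} (p : paths x y)
  : paths (apD f p) (transport_const p (f x) @ ap f p).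
Proof. destruct p; reflexivity. Defined.
Definition ap_transport_const {A T} {x y : A} (q : paths x y) {t1 t2 : T} (r : paths t1 t2)
  : paths (ap (transport (fun _ => T) q) r) (transport_const q t1 @ r @ (transport_const q t2)⁻¹).
Proof. destruct r, q; reflexivity. Defined.
Definition transport_paths_FlFr {A B} {F G : A -> B} {x y : A} (p : paths x y) (u : paths (F x) (G x))
  : paths (transport (fun a => paths (F a) (G a)) p u) ((ap F p)⁻¹ @ u @ ap G p).
Proof. destruct p; simpl. exact (concat_1p u)⁻¹. Defined.

Definition sq_solve {A} {x y z w : A} (a : paths x y) (v : paths y w) (u : paths x z) (b : paths z w)
  (e : paths (a @ v) (u @ b)) : paths (a⁻¹ @ u @ b) v.
Proof. destruct b, u, v. simpl in *. rewrite e. reflexivity. Defined.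

Definition whiskerL {A} {x y z : A} (p : paths x y) {q r : paths y z} (t : paths q r)
  : paths (p @ q) (p @ r) := ap (concat p) t.
Definition whiskerR {A} {x y z : A} {p q : paths x y} (t : paths p q) (r : paths y z)
  : paths (p @ r) (q @ r) := ap (fun u => u @ r) t.

Definition nat {X Y} {F G : X -> Y} (h : forall x, paths (F x) (G x)) {x y : X} (p : paths x y)
  : paths (ap F p @ h y) (h x @ ap G p) :=
  match p in paths _ y' return paths (ap F p @ h y') (h x @ ap G p) with
  | idpath => concat_1p (h x) end.


Definition sq_to_tr {X T} {F G : X -> T} {u v : X} (q : paths u v)
  {a : paths (F u) (G u)} {b : paths (F v) (G v)} (e : paths (ap F q @ b) (a @ ap G q))
  : paths (transport (fun x => paths (F x) (G x)) q a) b.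
Proof. destruct q. exact (e⁻¹ @ concat_1p b). Defined.
Definition sq_of_tr {X T} {F G : X -> T} {u v : X} (q : paths u v)
  {a : paths (F u) (G u)} {b : paths (F v) (G v)}
  (t : paths (transport (fun x => paths (F x) (G x)) q a) b)
  : paths (ap F q @ b) (a @ ap G q).
Proof. destruct q. exact (concat_1p b @ t⁻¹). Defined.
Lemma sq_of_to {X T} {F G : X -> T} {u v : X} (q : paths u v)
  {a : paths (F u) (G u)} {b : paths (F v) (G v)} (e : paths (ap F q @ b) (a @ ap G q))
  : paths (sq_of_tr q (sq_to_tr q e)) e.
Proof.
  destruct q. simpl in *. destruct e. simpl.
  generalize (concat_1p b). generalize (1 @ b). intros w c. destruct c. reflexivity.
Defined.
Lemma nat_apD {X T} {F G : X -> T} (H : forall x, paths (F x) (G x)) {u v : X} (q : paths u v)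
  : paths (nat H q) (sq_of_tr q (apD H q)).
Proof. destruct q. reflexivity. Defined.
Lemma sq_of_tr_nat {X T} {F G : X -> T} {u v : X} (q : paths u v)
  {a a' : paths (F u) (G u)} {b b' : paths (F v) (G v)}
  (t : paths (transport (fun x => paths (F x) (G x)) q a) b) (al : paths a' a) (be : paths b' b)
  : paths (sq_of_tr q (ap (transport (fun x => paths (F x) (G x)) q) al @ (t @ be⁻¹)))
          (whiskerL (ap F q) be @ sq_of_tr q t @ whiskerR al⁻¹ (ap G q)).
Proof. destruct al, be. destruct q. simpl. destruct t. simpl.
  rewrite concat_1p. simpl. reflexivity. Defined.

Section PO.
Context {C X Y : Type} {f : C -> X} {g : C -> Y} (P : Pushout f g).

Definition porec (T : Type) (l : X -> T) (r : Y -> T) (d : forall c, paths (l (f c)) (r (g c)))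
  : P -> T :=
  po_ind P (fun _ => T) l r (fun c => transport_const (po_glue P c) (l (f c)) @ d c).
Definition porec_inl T l r d x : paths (porec T l r d (po_inl P x)) (l x) :=
  po_ind_inl P (fun _ => T) l r _ x.
Definition porec_inr T l r d y : paths (porec T l r d (po_inr P y)) (r y) :=
  po_ind_inr P (fun _ => T) l r _ y.

Lemma porec_glue_gen {T} {u v : P} (F : P -> T) (q : paths u v) {a b : T}
  (cl : paths (F u) a) (cr : paths (F v) b) (d : paths a b)
  (H : paths (apD F q) (ap (transport (fun _ => T) q) cl @ ((transport_const q a @ d) @ cr⁻¹)))
  : paths (ap F q) (cl @ d @ cr⁻¹).
Proof.
  destruct q, d, cr. simpl in *. exact (H @ ap_idmap cl).
Defined.

Definition porec_glue T l r d c
  : paths (ap (porec T l r d) (po_glue P c))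
          (porec_inl T l r d (f c) @ d c @ (porec_inr T l r d (g c))⁻¹) :=
  porec_glue_gen _ _ _ _ _ (po_ind_glue P (fun _ => T) l r _ c).

Definition pohom_data {T} (F G : P -> T)
  (hl : forall x, paths (F (po_inl P x)) (G (po_inl P x)))
  (hr : forall y, paths (F (po_inr P y)) (G (po_inr P y)))
  (hg : forall c, paths (ap F (po_glue P c) @ hr (g c)) (hl (f c) @ ap G (po_glue P c)))
  : forall c, paths (transport (fun p => paths (F p) (G p)) (po_glue P c) (hl (f c))) (hr (g c)).
Proof.
  intro c. exact (sq_to_tr (po_glue P c) (hg c)).
Defined.

Definition pohom {T} (F G : P -> T) hl hr hg : forall p, paths (F p) (G p) :=
  po_ind P (fun p => paths (F p) (G p)) hl hr (pohom_data F G hl hr hg).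
Definition pohom_inl {T} (F G : P -> T) hl hr hg x : paths (pohom F G hl hr hg (po_inl P x)) (hl x) :=
  po_ind_inl P _ hl hr _ x.
Definition pohom_inr {T} (F G : P -> T) hl hr hg y : paths (pohom F G hl hr hg (po_inr P y)) (hr y) :=
  po_ind_inr P _ hl hr _ y.


Lemma pohom_glue {T} (F G : P -> T) hl hr hg c :
  paths (nat (pohom F G hl hr hg) (po_glue P c))
    (whiskerL (ap F (po_glue P c)) (pohom_inr F G hl hr hg (g c)) @ hg c
      @ whiskerR (pohom_inl F G hl hr hg (f c))⁻¹ (ap G (po_glue P c))).
Proof.
  rewrite nat_apD. unfold pohom_inr, pohom_inl, pohom.
  rewrite (po_ind_glue P (fun p => paths (F p) (G p)) hl hr (pohom_data F G hl hr hg) c).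
  rewrite sq_of_tr_nat. unfold pohom_data. rewrite sq_of_to. reflexivity.
Qed.

Lemma tr2 {X0 T} {F G : X0 -> T} (al be : forall x, paths (F x) (G x)) {u v : X0} (q : paths u v)
  (tu : paths (al u) (be u)) (tv : paths (al v) (be v))
  (e : paths (nat al q @ whiskerR tu (ap G q)) (whiskerL (ap F q) tv @ nat be q))
  : paths (transport (fun x => paths (al x) (be x)) q tu) tv.
Proof.
  destruct q. simpl in *. revert e. generalize (al u) (be u) tu tv. clear.
  intros a b tu tv e. destruct tv. simpl in *.
  unfold whiskerR in e. simpl in e. rewrite ap_idmap in e.
  destruct a. simpl in *. exact ((concat_1p tu)⁻¹ @ e). 
Qed.

Definition pohom2 {T} (F G : P -> T) (al be : forall p, paths (F p) (G p))
  (tl : forall x, paths (al (po_inl P x)) (be (po_inl P x)))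
  (tr : forall y, paths (al (po_inr P y)) (be (po_inr P y)))
  (tg : forall c, paths (nat al (po_glue P c) @ whiskerR (tl (f c)) (ap G (po_glue P c)))
                       (whiskerL (ap F (po_glue P c)) (tr (g c)) @ nat be (po_glue P c)))
  : forall p, paths (al p) (be p) :=
  po_ind P (fun p => paths (al p) (be p)) tl tr (fun c => tr2 al be _ _ _ (tg c)).

End PO.

Definition ap_nat {X Y} {F G : X -> Y} (h : forall x, paths (F x) (G x)) {x y : X} (p : paths x y)
  : paths (ap F p) (h x @ ap G p @ (h y)⁻¹).
Proof. destruct p. simpl. exact (concat_pV (h x))⁻¹. Defined.

Definition concat_p1 {A} {x y : A} (p : paths x y) : paths (p @ 1) p := 1.
Definition concat_pp_V {A} {x y z : A} (p : paths x y) (q : paths y z) : paths (p @ q @ q⁻¹) p.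
Proof. destruct q; reflexivity. Defined.
Definition concat_pV_p {A} {x y z : A} (p : paths x z) (q : paths y z) : paths (p @ q⁻¹ @ q) p.
Proof. destruct q; reflexivity. Defined.
Definition inv_1 {A} {x : A} : paths (@idpath A x)⁻¹ 1 := 1.

Ltac gnorm :=
  repeat first [ rewrite concat_p1 | rewrite concat_1p | rewrite inv_1
               | rewrite inv_pp | rewrite inv_inv | rewrite concat_assoc
               | rewrite concat_pV | rewrite concat_Vp
               | rewrite concat_pp_V | rewrite concat_pV_p ].

Definition prodsq {X Y} {x1 x2 : X} {y1 y2 : Y} (p : paths x1 x2) (q : paths y1 y2)
  : paths (ap (fun x => (x, y1)) p) (ap (pair x1) q @ ap (fun x => (x, y2)) p @ (ap (pair x2) q)⁻¹).
Proof. destruct p, q; reflexivity. Defined.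

(* elimination lemmas for contractible configurations *)
Ltac lind H := generalize dependent H; intro H; rewrite <- (inv_inv H); generalize (inverse H); clear H; intro H; destruct H.

Definition elimz {T} {a b c : T} (x : paths a b) (y : paths b c)
  (Q : forall z : paths a c, paths 1 (x @ y @ z⁻¹) -> Type)
  (base : Q (x @ y) (concat_pV (x @ y))⁻¹) : forall z H, Q z H.
Proof.
  intros z H. revert Q base H. destruct z. destruct y. intros Q base H. simpl in H.
  destruct H. exact base.
Defined.

Definition elimx_c {T} {a b c : T} (y : paths b c) (w : paths a c) : paths 1 (w @ y⁻¹ @ y @ w⁻¹).
Proof. destruct w, y. reflexivity. Defined.
Definition elimx {T} {a b c : T} (y : paths b c) (w : paths a c)
  (Q : forall x : paths a b, paths 1 (x @ y @ w⁻¹) -> Type)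
  (base : Q (w @ y⁻¹) (elimx_c y w)) : forall x H, Q x H.
Proof.
  intros x H. revert Q base H. destruct w. destruct y. intros Q base H. simpl in H.
  destruct H. exact base.
Defined.

Definition pe_c {T} {a b : T} (hl hr : paths a b) (hg : paths (1 @ hr) hl) : paths hl hr :=
  hg⁻¹ @ concat_1p hr.
Definition pe_H {T} {a b : T} (hl hr : paths a b) (hg : paths (1 @ hr) hl)
  : paths (concat_1p hl) (whiskerL 1 (pe_c hl hr hg) @ hg @ whiskerR 1⁻¹ 1).
Proof. destruct hg. destruct hr. reflexivity. Defined.
Definition pohom_elim {T} {a b : T} (hl hr : paths a b) (hg : paths (1 @ hr) hl)
  (Q : forall (t : paths a b) (cl : paths t hl) (cr : paths t hr),
        paths (concat_1p t) (whiskerL 1 cr @ hg @ whiskerR cl⁻¹ 1) -> Type)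
  (base : Q hl 1 (pe_c hl hr hg) (pe_H hl hr hg)) : forall t cl cr H, Q t cl cr H.
Proof.
  intros t cl cr H. lind cl. intro H. revert Q base H. destruct cr. intros Q base H.
  rewrite <- (concat_pp_V H (concat_1p hg)). generalize (H @ concat_1p hg). clear H. intro H.
  destruct H. destruct hl. exact base.
Defined.

Definition pind_l {A} {y : A} (Q : forall x, paths x y -> Type) (d : Q y 1) : forall x p, Q x p.
Proof. intros x p. destruct p. exact d. Defined.

Ltac revert_deps_of2 z H :=
  repeat match goal with
  | [ h : ?T |- _ ] =>
      tryif constr_eq h z then fail else
      tryif constr_eq h H then fail else
      match T with context [z] => generalize dependent h end
  end.
Ltac bring2 z H := revert_deps_of2 z H; revert H; revert z.
Ltac revert_deps_of4 t a b c :=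
  repeat match goal with
  | [ h : ?T |- _ ] =>
      tryif constr_eq h t then fail else
      tryif constr_eq h a then fail else
      tryif constr_eq h b then fail else
      tryif constr_eq h c then fail else
      match T with context [t] => generalize dependent h end
  end.
Ltac bring4 t a b c := revert_deps_of4 t a b c; revert c; revert b; revert a; revert t.

Section Model.
Context {SA SB V J P : Type}.
Context (N S : SA) (N' S' : SB) (p : paths N S) (q : paths N' S').
Context (il : SA -> V) (ir : SB -> V) (gv : paths (il N) (ir N')).
Context (W : J -> V) (j1 j2 : J) (k : paths j1 j2).
Context (W_inl : paths (W j1) (ir S')) (W_inr : paths (W j2) (il S)).
Context (W_glue : paths (ap W k) (W_inl @ ((ap ir q)⁻¹ @ gv⁻¹ @ ap il p) @ W_inr⁻¹)).
Context (wtp : V -> SA * SB) (wtp_inl : forall x, paths (wtp (il x)) (x, N'))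
        (wtp_inr : forall y, paths (wtp (ir y)) (N, y)).
Context (wtp_glue : paths (ap wtp gv) (wtp_inl N @ 1 @ (wtp_inr N')⁻¹)).

Definition Ehl_m : paths (S, S') (wtp (W j1)) :=
  (ap (fun x => (x, S')) p)⁻¹ @ (wtp_inr S')⁻¹ @ (ap wtp W_inl)⁻¹.
Definition Ehr_m : paths (S, S') (wtp (W j2)) :=
  (ap (pair S) q)⁻¹ @ (wtp_inl S)⁻¹ @ (ap wtp W_inr)⁻¹.
Definition Ehg_m : paths (ap (fun _ : J => (S, S')) k @ Ehr_m) (Ehl_m @ ap (fun j => wtp (W j)) k).
Proof.
  rewrite ap_const, (ap_compose W wtp), W_glue.
  rewrite !ap_pp, !ap_V. rewrite <- !ap_compose.
  rewrite (ap_nat wtp_inr), (ap_nat wtp_inl). rewrite wtp_glue.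
  rewrite (prodsq p q). unfold Ehl_m, Ehr_m. gnorm. reflexivity.
Defined.

Context (Ehat : forall j, paths (S, S') (wtp (W j))) (EIl : paths (Ehat j1) Ehl_m) (EIr : paths (Ehat j2) Ehr_m).
Context (HE : paths (nat Ehat k) (whiskerL (ap (fun _ => (S, S')) k) EIr @ Ehg_m
                                   @ whiskerR EIl⁻¹ (ap (fun j => wtp (W j)) k))).

Context (pl : P) (pr : V -> P) (pg : forall j, paths pl (pr (W j))).
Context (e : P -> SA * SB) (e_inl : paths (e pl) (S, S')) (e_inr : forall w, paths (e (pr w)) (wtp w)).
Context (e_glue : forall j, paths (ap e (pg j)) (e_inl @ Ehat j @ (e_inr (W j))⁻¹)).
Context (psi : SA -> P) (psi_inl : paths (psi N) (pr (ir S'))) (psi_inr : paths (psi S) pl).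
Context (psi_glue : paths (ap psi p) (psi_inl @ ((ap pr W_inl)⁻¹ @ (pg j1)⁻¹) @ psi_inr⁻¹)).

Definition phi_m (x : SA) : P := pr (il x).
Definition pg_glue_m : paths (pg j2) (pg j1 @ ap pr (ap W k)).
Proof.
  rewrite <- ap_compose. rewrite <- (@nat _ _ (fun _ => pl) (fun j => pr (W j)) pg _ _ k).
  rewrite ap_const. rewrite concat_1p. reflexivity.
Defined.
Definition chil_m : paths (phi_m N) (psi N) := ap pr gv @ ap pr (ap ir q) @ psi_inl⁻¹.
Definition chir_m : paths (phi_m S) (psi S) := (ap pr W_inr)⁻¹ @ (pg j2)⁻¹ @ psi_inr⁻¹.
Definition chig_m : paths (ap phi_m p @ chir_m) (chil_m @ ap psi p).
Proof.
  unfold chir_m, chil_m. rewrite psi_glue. rewrite pg_glue_m. rewrite W_glue.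
  unfold phi_m. rewrite (ap_compose il pr).
  rewrite !ap_pp, !ap_V. gnorm. reflexivity.
Defined.
Definition rhol_m : paths (e (psi N)) (N, S') := ap e psi_inl @ e_inr (ir S') @ wtp_inr S'.
Definition rhor_m : paths (e (psi S)) (S, S') := ap e psi_inr @ e_inl.
Definition rhog_m : paths (ap (fun x => e (psi x)) p @ rhor_m) (rhol_m @ ap (fun x => (x, S')) p).
Proof.
  rewrite (ap_compose psi e). rewrite psi_glue. rewrite !ap_pp, !ap_V. rewrite e_glue.
  rewrite EIl. rewrite <- (ap_compose pr e). rewrite (ap_nat e_inr).
  unfold rhol_m, rhor_m, Ehl_m. gnorm. reflexivity.
Defined.

Context (chi : forall x, paths (phi_m x) (psi x)) (CIl : paths (chi N) chil_m) (CIr : paths (chi S) chir_m).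
Context (Hchi : paths (nat chi p) (whiskerL (ap phi_m p) CIr @ chig_m @ whiskerR CIl⁻¹ (ap psi p))).
Context (rho : forall x, paths (e (psi x)) (x, S')) (RIl : paths (rho N) rhol_m) (RIr : paths (rho S) rhor_m).
Context (Hrho : paths (nat rho p) (whiskerL (ap (fun x => e (psi x)) p) RIr @ rhog_m
                                    @ whiskerR RIl⁻¹ (ap (fun x => (x, S')) p))).

Definition Gal_m (x : SA) : paths (e (phi_m x)) (x, S') := ap e (chi x) @ rho x.
Definition Gbe_m (x : SA) : paths (e (phi_m x)) (x, S') := e_inr (il x) @ wtp_inl x @ ap (pair x) q.
Definition Gtl_m : paths (Gal_m N) (Gbe_m N).
Proof.
  unfold Gal_m, Gbe_m. rewrite CIl, RIl. unfold chil_m, rhol_m.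
  rewrite !ap_pp, !ap_V. rewrite <- !(ap_compose pr e). rewrite !(ap_nat e_inr).
  rewrite wtp_glue. rewrite <- (ap_compose ir wtp). rewrite (ap_nat wtp_inr). gnorm. reflexivity.
Defined.
Definition Gtr_m : paths (Gal_m S) (Gbe_m S).
Proof.
  unfold Gal_m, Gbe_m. rewrite CIr, RIr. unfold chir_m, rhor_m.
  rewrite !ap_pp, !ap_V. rewrite <- !(ap_compose pr e). rewrite !(ap_nat e_inr).
  rewrite e_glue, EIr. unfold Ehr_m. gnorm. reflexivity.
Defined.
Definition Gtg_m : paths (nat Gal_m p @ whiskerR Gtl_m (ap (fun x => (x, S')) p))
  (whiskerL (ap (fun x => e (phi_m x)) p) Gtr_m @ nat Gbe_m p).
Proof.
  unfold Gtl_m, Gtr_m, Gal_m, Gbe_m.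
  revert Hrho. revert RIr. revert RIl. revert rho. revert Hchi. revert CIr. revert CIl. revert chi.
  unfold rhog_m, rhol_m, rhor_m, chig_m, chil_m, chir_m, phi_m, pg_glue_m.
  revert psi_glue. revert psi_inr. revert psi_inl. revert psi. revert e_glue. revert e_inr. revert e_inl.
  revert e. revert pg. revert pr. revert pl. revert HE. revert EIr. revert EIl. revert Ehat.
  unfold Ehg_m, Ehl_m, Ehr_m.
  revert wtp_glue. revert wtp_inr. revert wtp_inl. revert wtp. revert W_glue. revert W_inr. revert W_inl.
  destruct k. destruct p. destruct q. cbn.
  intro W_inl. refine (elimz W_inl (1 @ gv⁻¹) _ _). cbn beta.
  intros wtp wtp_inl wtp_inr. generalize (wtp_inr N') as r. clear wtp_inr.
  revert W_inl. generalize dependent gv. generalize (ir N') as v. intros v gv0 W_inl0. destruct gv0.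
  refine (elimz (wtp_inl N) 1 _ _). cbn beta.
  intros Ehat EIl EIr HE pl pr pg e e_inl e_inr e_glue.
  generalize (e_glue j1) as E. clear e_glue. revert e_inr. revert e_inl. revert e. revert pg. revert pr. revert pl. revert HE. revert EIr. revert EIl.
  generalize (Ehat j1) as t. clear Ehat.
  refine (pohom_elim _ _ _ _ _). cbn beta.
  intros pl pr pg e e_inl e_inr E.
  revert E. generalize (pg j1) as u. clear pg. intro u. lind u.
  revert e_inl. refine (elimx _ _ _ _). cbn beta.
  intros psi psi_inl. refine (elimz _ _ _ _). cbn beta.
  intro chi. generalize (chi N) as c. clear chi.
  refine (pohom_elim _ _ _ _ _). cbn beta.
  intro rho. generalize (rho N) as c. clear rho.
  refine (pohom_elim _ _ _ _ _). cbn beta.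
  revert psi_inl. generalize (psi N) as z. intros z pin. lind pin.
  revert W_inl0. generalize (W j1) as w. intros w wi. lind wi.
  cbn. generalize (e_inr (il N)) as er. clear e_inr. generalize (wtp_inl N) as wl. clear wtp_inl.
  generalize (wtp (il N)) as s. intros s wl er. destruct er.
  revert wl. generalize (e (pr (il N))) as y. refine (pind_l _ _).
  reflexivity.
Defined.
End Model.

Section Model2.
Context {SA SB V J P : Type}.
Context (N S : SA) (N' S' : SB) (p : paths N S) (q : paths N' S').
Context (il : SA -> V) (ir : SB -> V) (gv : paths (il N) (ir N')).
Context (W : J -> V) (j1 j2 : J) (k : paths j1 j2).
Context (W_inl : paths (W j1) (ir S')) (W_inr : paths (W j2) (il S)).
Context (W_glue : paths (ap W k) (W_inl @ ((ap ir q)⁻¹ @ gv⁻¹ @ ap il p) @ W_inr⁻¹)).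
Context (wtp : V -> SA * SB) (wtp_inl : forall x, paths (wtp (il x)) (x, N'))
        (wtp_inr : forall y, paths (wtp (ir y)) (N, y)).
Context (wtp_glue : paths (ap wtp gv) (wtp_inl N @ 1 @ (wtp_inr N')⁻¹)).
Context (Ehat : forall j, paths (S, S') (wtp (W j)))
        (EIl : paths (Ehat j1) (Ehl_m N S S' p ir W j1 W_inl wtp wtp_inr))
        (EIr : paths (Ehat j2) (Ehr_m S N' S' q il W j2 W_inr wtp wtp_inl)).
Context (HE : paths (nat Ehat k) (whiskerL (ap (fun _ => (S, S')) k) EIr
                @ Ehg_m N S N' S' p q il ir gv W j1 j2 k W_inl W_inr W_glue wtp wtp_inl wtp_inr wtp_glue
                @ whiskerR EIl⁻¹ (ap (fun j => wtp (W j)) k))).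
Context (pl : P) (pr : V -> P) (pg : forall j, paths pl (pr (W j))).
Context (psi : SA -> P) (psi_inl : paths (psi N) (pr (ir S'))) (psi_inr : paths (psi S) pl).
Context (psi_glue : paths (ap psi p) (psi_inl @ ((ap pr W_inl)⁻¹ @ (pg j1)⁻¹) @ psi_inr⁻¹)).
Context (chi : forall x, paths (phi_m il pr x) (psi x))
        (CIl : paths (chi N) (chil_m N N' S' q il ir gv pr psi psi_inl))
        (CIr : paths (chi S) (chir_m S il W j2 W_inr pl pr pg psi psi_inr)).
Context (Hchi : paths (nat chi p) (whiskerL (ap (phi_m il pr) p) CIr
                 @ chig_m N S N' S' p q il ir gv W j1 j2 k W_inl W_inr W_glue pl pr pg psi psi_inl psi_inr psi_glue
                 @ whiskerR CIl⁻¹ (ap psi p))).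
Context (G : SA -> SB -> P) (G_inl : forall x, paths (G x N') (phi_m il pr x))
        (G_inr : forall x, paths (G x S') (psi x))
        (G_glue : forall x, paths (ap (G x) q) (G_inl x @ chi x @ (G_inr x)⁻¹)).

Definition gm (z : SA * SB) : P := G (fst z) (snd z).
Definition sigl_m : paths (G N N') (pr (ir N')) := G_inl N @ ap pr gv.
Definition sigr_m : paths (G N S') (pr (ir S')) := G_inr N @ psi_inl.
Definition sigg_m : paths (ap (G N) q @ sigr_m) (sigl_m @ ap (fun y => pr (ir y)) q).
Proof.
  rewrite G_glue, CIl. rewrite (ap_compose ir pr). unfold sigl_m, sigr_m, chil_m. gnorm. reflexivity.
Defined.
Context (sig : forall y, paths (G N y) (pr (ir y))) (SIl : paths (sig N') sigl_m) (SIr : paths (sig S') sigr_m).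
Context (Hsig : paths (nat sig q) (whiskerL (ap (G N) q) SIr @ sigg_m @ whiskerR SIl⁻¹ (ap (fun y => pr (ir y)) q))).
Definition laml_m (x : SA) : paths (gm (wtp (il x))) (pr (il x)) := ap gm (wtp_inl x) @ G_inl x.
Definition lamr_m (y : SB) : paths (gm (wtp (ir y))) (pr (ir y)) := ap gm (wtp_inr y) @ sig y.
Definition lamg_m : paths (ap (fun w => gm (wtp w)) gv @ lamr_m N') (laml_m N @ ap pr gv).
Proof.
  rewrite (ap_compose wtp gm). rewrite wtp_glue. unfold lamr_m, laml_m. rewrite SIl. unfold sigl_m.
  rewrite !ap_pp, !ap_V. gnorm. reflexivity.
Defined.
Context (lam : forall w, paths (gm (wtp w)) (pr w)) (LIl : forall x, paths (lam (il x)) (laml_m x))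
        (LIr : forall y, paths (lam (ir y)) (lamr_m y)).
Context (Hlam : paths (nat lam gv) (whiskerL (ap (fun w => gm (wtp w)) gv) (LIr N') @ lamg_m
                                     @ whiskerR (LIl N)⁻¹ (ap pr gv))).

Definition Kal_m (j : J) : paths (gm (S, S')) (pr (W j)) := ap gm (Ehat j) @ lam (W j).
Definition Kbe_m (j : J) : paths (gm (S, S')) (pr (W j)) := G_inr S @ psi_inr @ pg j.
Definition Ktl_m : paths (Kal_m j1) (Kbe_m j1).
Proof.
  unfold Kal_m, Kbe_m. rewrite EIl. unfold Ehl_m. rewrite !ap_pp, !ap_V.
  rewrite <- (ap_compose (fun x => (x, S')) gm). rewrite <- !(ap_compose wtp gm).
  rewrite (ap_nat lam W_inl). rewrite LIr. unfold lamr_m. rewrite SIr. unfold sigr_m.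
  change (fun x => gm (x, S')) with (fun x => G x S'). rewrite (ap_nat G_inr). rewrite psi_glue.
  gnorm. reflexivity.
Defined.
Definition Ktr_m : paths (Kal_m j2) (Kbe_m j2).
Proof.
  unfold Kal_m, Kbe_m. rewrite EIr. unfold Ehr_m. rewrite !ap_pp, !ap_V.
  rewrite <- (ap_compose (pair S) gm). rewrite <- !(ap_compose wtp gm).
  rewrite (ap_nat lam W_inr). rewrite LIl. unfold laml_m.
  change (fun y => gm (S, y)) with (G S). rewrite G_glue. rewrite CIr. unfold chir_m.
  gnorm. reflexivity.
Defined.
Definition Ktg_m : paths (nat Kal_m k @ whiskerR Ktl_m (ap (fun j => pr (W j)) k))
  (whiskerL (ap (fun _ => gm (S, S')) k) Ktr_m @ nat Kbe_m k).
Proof.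
  unfold Ktl_m, Ktr_m, Kal_m, Kbe_m.
  revert Hlam. revert LIr. revert LIl. revert lam.
  unfold lamg_m, laml_m, lamr_m.
  revert Hsig. revert SIr. revert SIl. revert sig.
  unfold sigg_m, sigl_m, sigr_m, gm.
  revert G_glue. revert G_inr. revert G_inl. revert G.
  revert Hchi. revert CIr. revert CIl. revert chi.
  unfold chig_m, chil_m, chir_m, phi_m, pg_glue_m.
  revert psi_glue. revert psi_inr. revert psi_inl. revert psi. revert pg. revert pr. revert pl.
  revert HE. revert EIr. revert EIl. revert Ehat.
  unfold Ehg_m, Ehl_m, Ehr_m.
  revert wtp_glue. revert wtp_inr. revert wtp_inl. revert wtp. revert W_glue. revert W_inr. revert W_inl.
  destruct k. destruct p. destruct q. cbn.
  intros W_inl0. refine (elimz W_inl0 (1 @ gv⁻¹) _ _). cbn beta.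
  intros wtp0 wl0 wr0 wg0 Eh EIl0 EIr0 HE0 pl0 pr0 pg0 psi0 psiL psiR psiG chi0 CIl0 CIr0 Hchi0
    G0 GL GR GG sig0 SIl0 SIr0 Hsig0 lam0 LIl0 LIr0 Hlam0.
  set (t := Eh j1) in *. clearbody t. clear Eh.
  set (u := pg0 j1) in *. clearbody u. clear pg0.
  set (gg := GG N) in *. clearbody gg. clear GG.
  set (c := chi0 N) in *. clearbody c. clear chi0.
  set (li := LIl0 N) in *. clearbody li. clear LIl0.
  set (ri := LIr0 N') in *. clearbody ri. clear LIr0.
  set (wl := wl0 N) in *. clearbody wl. clear wl0.
  set (wr := wr0 N') in *. clearbody wr. clear wr0.
  set (gl := GL N) in *. clearbody gl. clear GL.
  set (gr := GR N) in *. clearbody gr. clear GR.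
  set (s := sig0 N') in *. clearbody s. clear sig0.
  set (w := W j1) in *. clearbody w. bring2 w W_inl0. refine (pind_l _ _). intros.
  set (v := ir N') in *. clearbody v. destruct gv. cbn in *.
  bring2 wr wg0. refine (elimz wl 1 _ _). intros.
  set (l := lam0 (il N)) in *. clearbody l. clear lam0.
  bring4 l li ri Hlam0. refine (pohom_elim _ _ _ _ _). intros.
  bring4 t EIl0 EIr0 HE0. refine (pohom_elim _ _ _ _ _). intros.
  bring2 pl0 u. refine (pind_l _ _). intros.
  bring2 psiR psiG. refine (elimz _ _ _ _). intros.
  bring4 c CIl0 CIr0 Hchi0. refine (pohom_elim _ _ _ _ _). intros.
  bring2 gr gg. refine (elimz _ _ _ _). intros.
  bring4 s SIl0 SIr0 Hsig0. refine (pohom_elim _ _ _ _ _). intros.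
  set (y0 := wtp0 (il N)) in *. clearbody y0. bring2 y0 wl. refine (pind_l _ _). intros. cbn.
  set (z0 := psi0 N) in *. clearbody z0. bring2 z0 psiL. refine (pind_l _ _). intros.
  set (g0 := G0 N N') in *. clearbody g0. bring2 g0 gl. refine (pind_l _ _).
  reflexivity.
Qed.
End Model2.

Section Main.
Context (A B : Type) (SA : Susp A) (SB : Susp B)
  (V : Wedge SA (north SA) SB (north SB)) (J : Join A B).

Definition N : SA := po_inl SA tt.
Definition S : SA := po_inr SA tt.
Definition m (a : A) : paths N S := po_glue SA a.
Definition N' : SB := po_inl SB tt.
Definition S' : SB := po_inr SB tt.
Definition m' (b : B) : paths N' S' := po_glue SB b.
Definition il : SA -> V := po_inl V.
Definition ir : SB -> V := po_inr V.
Definition gv : paths (il N) (ir N') := po_glue V tt.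
Definition ja : A -> J := po_inl J.
Definition jb : B -> J := po_inr J.
Definition jg (c : A * B) : paths (ja (fst c)) (jb (snd c)) := po_glue J c.

Definition W : J -> V :=
  porec J V (fun _ => ir S') (fun _ => il S)
    (fun c => (ap ir (m' (snd c)))⁻¹ @ gv⁻¹ @ ap il (m (fst c))).
Definition W_inl a : paths (W (ja a)) (ir S') := porec_inl J _ _ _ _ a.
Definition W_inr b : paths (W (jb b)) (il S) := porec_inr J _ _ _ _ b.

Definition W_glue c : paths (ap W (jg c))
  (W_inl (fst c) @ ((ap ir (m' (snd c)))⁻¹ @ gv⁻¹ @ ap il (m (fst c))) @ (W_inr (snd c))⁻¹) :=
  porec_glue J V _ _ _ c.

Definition wtp : V -> SA * SB := wedge_to_prod V.
Definition wtp_inl x : paths (wtp (il x)) (x, N') := porec_inl V (SA * SB) (fun x => (x, N')) (fun y => (N, y)) (fun _ => 1) x.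
Definition wtp_inr y : paths (wtp (ir y)) (N, y) := porec_inr V (SA * SB) (fun x => (x, N')) (fun y => (N, y)) (fun _ => 1) y.
Definition wtp_glue : paths (ap wtp gv) (wtp_inl N @ 1 @ (wtp_inr N')⁻¹) :=
  porec_glue V (SA * SB) (fun x => (x, N')) (fun y => (N, y)) (fun _ => 1) tt.


Definition Ehl (a : A) : paths (S, S') (wtp (W (ja a))) := Ehl_m N S S' (m a) ir W (ja a) (W_inl a) wtp wtp_inr.
Definition Ehr (b : B) : paths (S, S') (wtp (W (jb b))) := Ehr_m S N' S' (m' b) il W (jb b) (W_inr b) wtp wtp_inl.
Definition Ehg (c : A * B) : paths (ap (fun _ : J => (S, S')) (jg c) @ Ehr (snd c))
                               (Ehl (fst c) @ ap (fun j => wtp (W j)) (jg c)) :=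
  Ehg_m N S N' S' (m (fst c)) (m' (snd c)) il ir gv W (ja (fst c)) (jb (snd c)) (jg c)
    (W_inl (fst c)) (W_inr (snd c)) (W_glue c) wtp wtp_inl wtp_inr wtp_glue.
Definition Ehat : forall j, paths (S, S') (wtp (W j)) :=
  pohom J (fun _ => (S, S')) (fun j => wtp (W j)) Ehl Ehr Ehg.

Context (P : Pushout (fun _ : J => tt) W).
Definition pl : P := po_inl P tt.
Definition ut {Q : unit -> Type} (q : Q tt) : forall u, Q u := fun u => match u with tt => q end.
Definition pr : V -> P := po_inr P.
Definition pg (j : J) : paths pl (pr (W j)) := po_glue P j.

Definition e : P -> SA * SB := porec P (SA * SB) (fun _ => (S, S')) wtp Ehat.
Definition e_inl : paths (e pl) (S, S') := porec_inl P _ _ _ _ tt.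
Definition e_inr w : paths (e (pr w)) (wtp w) := porec_inr P _ _ _ _ w.

Definition e_glue j : paths (ap e (pg j)) (e_inl @ Ehat j @ (e_inr (W j))⁻¹) := porec_glue P _ _ _ _ j.
Definition Ehat_inl a : paths (Ehat (ja a)) (Ehl a) := pohom_inl J _ _ _ _ _ a.
Definition Ehat_inr b : paths (Ehat (jb b)) (Ehr b) := pohom_inr J _ _ _ _ _ b.

Definition phi (x : SA) : P := pr (il x).
Definition psi : SA -> P :=
  porec SA P (fun _ => pr (ir S')) (fun _ => pl) (fun a => (ap pr (W_inl a))⁻¹ @ (pg (ja a))⁻¹).
Definition psi_inl : paths (psi N) (pr (ir S')) := porec_inl SA _ _ _ _ tt.
Definition psi_inr : paths (psi S) pl := porec_inr SA _ _ _ _ tt.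
Definition psi_glue a : paths (ap psi (m a)) (psi_inl @ ((ap pr (W_inl a))⁻¹ @ (pg (ja a))⁻¹) @ psi_inr⁻¹) :=
  porec_glue SA P _ _ _ a.
Definition pgsq (c : A * B) : paths (ap (fun _ => pl) (jg c) @ pg (jb (snd c))) (pg (ja (fst c)) @ ap (fun j => pr (W j)) (jg c)) :=
  @nat _ _ (fun _ => pl) (fun j => pr (W j)) pg _ _ (jg c).
Lemma pg_glue (c : A * B) : paths (pg (jb (snd c))) (pg (ja (fst c)) @ ap pr (ap W (jg c))).
Proof. rewrite <- ap_compose. rewrite <- pgsq. rewrite ap_const. rewrite concat_1p. reflexivity. Qed.

Definition chil (b : B) : paths (phi N) (psi N) := chil_m N N' S' (m' b) il ir gv pr psi psi_inl.
Definition chir (b : B) : paths (phi S) (psi S) := chir_m S il W (jb b) (W_inr b) pl pr pg psi psi_inr.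
Definition chig (b : B) (a : A) : paths (ap phi (m a) @ chir b) (chil b @ ap psi (m a)) :=
  chig_m N S N' S' (m a) (m' b) il ir gv W (ja a) (jb b) (jg (a, b)) (W_inl a) (W_inr b) (W_glue (a, b))
    pl pr pg psi psi_inl psi_inr (psi_glue a).
Definition chi (b : B) : forall x, paths (phi x) (psi x) :=
  pohom SA phi psi (ut (chil b)) (ut (chir b)) (chig b).

Definition G (x : SA) : SB -> P := porec SB P (fun _ => phi x) (fun _ => psi x) (fun b => chi b x).
Definition G_inl x : paths (G x N') (phi x) := porec_inl SB _ _ _ _ tt.
Definition G_inr x : paths (G x S') (psi x) := porec_inr SB _ _ _ _ tt.
Definition G_glue x b : paths (ap (G x) (m' b)) (G_inl x @ chi b x @ (G_inr x)⁻¹) := porec_glue SB P _ _ _ b.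
Definition chi_inl b : paths (chi b N) (chil b) := pohom_inl SA _ _ _ _ _ tt.
Definition chi_inr b : paths (chi b S) (chir b) := pohom_inr SA _ _ _ _ _ tt.
Definition gmap (z : SA * SB) : P := G (fst z) (snd z).

Definition rhol : paths (e (psi N)) (N, S') := rhol_m N S' ir wtp wtp_inr pr e e_inr psi psi_inl.
Definition rhor : paths (e (psi S)) (S, S') := rhor_m S S' pl e e_inl psi psi_inr.
Definition rhog (a : A) : paths (ap (fun x => e (psi x)) (m a) @ rhor) (rhol @ ap (fun x => (x, S')) (m a)) :=
  rhog_m N S S' (m a) ir W (ja a) (W_inl a) wtp wtp_inr Ehat (Ehat_inl a) pl pr pg e e_inl e_inr e_glue
    psi psi_inl psi_inr (psi_glue a).
Definition rho : forall x, paths (e (psi x)) (x, S') :=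
  pohom SA (fun x => e (psi x)) (fun x => (x, S')) (ut rhol) (ut rhor) rhog.

Definition hN x : paths (e (G x N')) (x, N') := ap e (G_inl x) @ e_inr (il x) @ wtp_inl x.
Definition hS x : paths (e (G x S')) (x, S') := ap e (G_inr x) @ rho x.
Definition rho_inl : paths (rho N) rhol := pohom_inl SA _ _ _ _ _ tt.
Definition rho_inr : paths (rho S) rhor := pohom_inr SA _ _ _ _ _ tt.

Definition Gal (b : B) (x : SA) : paths (e (phi x)) (x, S') := ap e (chi b x) @ rho x.
Definition Gbe (b : B) (x : SA) : paths (e (phi x)) (x, S') := e_inr (il x) @ wtp_inl x @ ap (pair x) (m' b).
Definition Gtl (b : B) : paths (Gal b N) (Gbe b N) :=
  Gtl_m N N' S' (m' b) il ir gv wtp wtp_inl wtp_inr wtp_glue pr e e_inr psi psi_inl (chi b) (chi_inl b) rho rho_inl.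
Definition Gtr (b : B) : paths (Gal b S) (Gbe b S) :=
  Gtr_m S N' S' (m' b) il W (jb b) (W_inr b) wtp wtp_inl Ehat (Ehat_inr b) pl pr pg e e_inl e_inr e_glue
    psi psi_inr (chi b) (chi_inr b) rho rho_inr.
Definition Ehat_glue (c : A * B) : paths (nat Ehat (jg c))
  (whiskerL (ap (fun _ => (S, S')) (jg c)) (Ehat_inr (snd c)) @ Ehg c
   @ whiskerR (Ehat_inl (fst c))⁻¹ (ap (fun j => wtp (W j)) (jg c))) :=
  pohom_glue J (fun _ => (S, S')) (fun j => wtp (W j)) Ehl Ehr Ehg c.
Definition chi_glue (b : B) (a : A) : paths (nat (chi b) (m a))
  (whiskerL (ap phi (m a)) (chi_inr b) @ chig b a @ whiskerR (chi_inl b)⁻¹ (ap psi (m a))) :=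
  pohom_glue SA phi psi (ut (chil b)) (ut (chir b)) (chig b) a.
Definition rho_glue (a : A) : paths (nat rho (m a))
  (whiskerL (ap (fun x => e (psi x)) (m a)) rho_inr @ rhog a @ whiskerR rho_inl⁻¹ (ap (fun x => (x, S')) (m a))) :=
  pohom_glue SA (fun x => e (psi x)) (fun x => (x, S')) (ut rhol) (ut rhor) rhog a.
Definition Gtg (b : B) (a : A) : paths (nat (Gal b) (m a) @ whiskerR (Gtl b) (ap (fun x => (x, S')) (m a)))
  (whiskerL (ap (fun x => e (phi x)) (m a)) (Gtr b) @ nat (Gbe b) (m a)) :=
  Gtg_m N S N' S' (m a) (m' b) il ir gv W (ja a) (jb b) (jg (a, b)) (W_inl a) (W_inr b) (W_glue (a, b))
    wtp wtp_inl wtp_inr wtp_glue Ehat (Ehat_inl a) (Ehat_inr b) (Ehat_glue (a, b)) pl pr pg e e_inl e_inr e_glue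
    psi psi_inl psi_inr (psi_glue a) (chi b) (chi_inl b) (chi_inr b) (chi_glue b a) rho rho_inl rho_inr (rho_glue a).
Definition Gam (b : B) : forall x, paths (Gal b x) (Gbe b x) :=
  pohom2 SA (fun x => e (phi x)) (fun x => (x, S')) (Gal b) (Gbe b) (ut (Gtl b)) (ut (Gtr b)) (Gtg b).
Lemma Theta (b : B) : forall x, paths (ap (fun y => e (G x y)) (m' b) @ hS x)
                                      (hN x @ ap (fun y => (x, y)) (m' b)).
Proof.
  intro x. pose proof (Gam b x) as H. unfold Gal, Gbe in H.
  rewrite (ap_compose (G x) e). rewrite G_glue. unfold hS, hN.
  rewrite !ap_pp, !ap_V. gnorm. rewrite <- !concat_assoc. rewrite H. gnorm. reflexivity.
Qed.
Definition Hprod (x : SA) : forall y, paths (e (G x y)) (x, y) :=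
  pohom SB (fun y => e (G x y)) (fun y => (x, y)) (ut (hN x)) (ut (hS x)) (fun b => Theta b x).
Definition sect (z : SA * SB) : paths (e (gmap z)) z :=
  match z with (x, y) => Hprod x y end.

Definition sigl : paths (G N N') (pr (ir N')) := sigl_m N N' il ir gv pr G G_inl.
Definition sigr : paths (G N S') (pr (ir S')) := sigr_m N S' ir pr psi psi_inl G G_inr.
Definition sigg (b : B) : paths (ap (G N) (m' b) @ sigr) (sigl @ ap (fun y => pr (ir y)) (m' b)) :=
  sigg_m N N' S' (m' b) il ir gv pr psi psi_inl (chi b) (chi_inl b) G G_inl G_inr (fun x => G_glue x b).
Definition sig : forall y, paths (G N y) (pr (ir y)) :=
  pohom SB (G N) (fun y => pr (ir y)) (ut sigl) (ut sigr) sigg.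
Definition sig_inl : paths (sig N') sigl := pohom_inl SB _ _ _ _ _ tt.
Definition sig_inr : paths (sig S') sigr := pohom_inr SB _ _ _ _ _ tt.
Definition sig_glue (b : B) : paths (nat sig (m' b))
  (whiskerL (ap (G N) (m' b)) sig_inr @ sigg b @ whiskerR sig_inl⁻¹ (ap (fun y => pr (ir y)) (m' b))) :=
  pohom_glue SB (G N) (fun y => pr (ir y)) (ut sigl) (ut sigr) sigg b.

Definition laml x : paths (gmap (wtp (il x))) (pr (il x)) := laml_m N' il wtp wtp_inl pr G G_inl x.
Definition lamr y : paths (gmap (wtp (ir y))) (pr (ir y)) := lamr_m N ir wtp wtp_inr pr G sig y.
Definition lamg : paths (ap (fun w => gmap (wtp w)) gv @ lamr N') (laml N @ ap pr gv) :=
  lamg_m N N' il ir gv wtp wtp_inl wtp_inr wtp_glue pr G G_inl sig sig_inl.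
Definition lam : forall w, paths (gmap (wtp w)) (pr w) :=
  pohom V (fun w => gmap (wtp w)) pr laml lamr (ut lamg).
Definition lam_inl x : paths (lam (il x)) (laml x) := pohom_inl V _ _ _ _ _ x.
Definition lam_inr y : paths (lam (ir y)) (lamr y) := pohom_inr V _ _ _ _ _ y.
Definition lam_glue : paths (nat lam gv)
  (whiskerL (ap (fun w => gmap (wtp w)) gv) (lam_inr N') @ lamg @ whiskerR (lam_inl N)⁻¹ (ap pr gv)) :=
  pohom_glue V (fun w => gmap (wtp w)) pr laml lamr (ut lamg) tt.

Definition Kal (j : J) : paths (gmap (S, S')) (pr (W j)) := ap gmap (Ehat j) @ lam (W j).
Definition Kbe (j : J) : paths (gmap (S, S')) (pr (W j)) := G_inr S @ psi_inr @ pg j.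
Definition Ktl (a : A) : paths (Kal (ja a)) (Kbe (ja a)) :=
  Ktl_m N S S' (m a) ir W (ja a) (W_inl a) wtp wtp_inr Ehat (Ehat_inl a) pl pr pg psi psi_inl psi_inr
    (psi_glue a) G G_inr sig sig_inr lam lam_inr.
Definition Ktr (b : B) : paths (Kal (jb b)) (Kbe (jb b)) :=
  Ktr_m S N' S' (m' b) il W (jb b) (W_inr b) wtp wtp_inl Ehat (Ehat_inr b) pl pr pg psi psi_inr
    (chi b) (chi_inr b) G G_inl G_inr (fun x => G_glue x b) lam lam_inl.
Definition Ktg (c : A * B) : paths (nat Kal (jg c) @ whiskerR (Ktl (fst c)) (ap (fun j => pr (W j)) (jg c)))
  (whiskerL (ap (fun _ => gmap (S, S')) (jg c)) (Ktr (snd c)) @ nat Kbe (jg c)).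
Proof.
  destruct c as [a b].
  exact (Ktg_m N S N' S' (m a) (m' b) il ir gv W (ja a) (jb b) (jg (a, b))
    (W_inl a) (W_inr b) (W_glue (a, b)) wtp wtp_inl wtp_inr wtp_glue Ehat (Ehat_inl a) (Ehat_inr b)
    (Ehat_glue (a, b)) pl pr pg psi psi_inl psi_inr (psi_glue a) (chi b) (chi_inl b) (chi_inr b)
    (chi_glue b a) G G_inl G_inr (fun x => G_glue x b) sig sig_inl sig_inr (sig_glue b)
    lam lam_inl lam_inr lam_glue).
Defined.
Definition K2 : forall j, paths (Kal j) (Kbe j) :=
  pohom2 J (fun _ => gmap (S, S')) (fun j => pr (W j)) Kal Kbe Ktl Ktr Ktg.

Definition kl : paths (gmap (e pl)) pl := ap gmap e_inl @ G_inr S @ psi_inr.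
Definition kr w : paths (gmap (e (pr w))) (pr w) := ap gmap (e_inr w) @ lam w.
Lemma kg : forall j, paths (ap (fun p => gmap (e p)) (pg j) @ kr (W j)) (kl @ ap (fun p => p) (pg j)).
Proof.
  intro j. pose proof (K2 j) as H. unfold Kal, Kbe in H.
  rewrite (ap_compose e gmap). rewrite e_glue. rewrite ap_idmap. unfold kr, kl.
  rewrite !ap_pp, !ap_V. gnorm. rewrite <- !concat_assoc. rewrite H. gnorm. reflexivity.
Qed.
Definition retr : forall p, paths (gmap (e p)) p :=
  pohom P (fun p => gmap (e p)) (fun p => p) (ut kl) kr kg.

End Main.

Theorem proposition8 (funext : Funext) (A B : Type) (SA : Susp A) (SB : Susp B)
  (V : Wedge SA (north SA) SB (north SB)) (J : Join A B) :
  { W : J -> V &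
    forall P : Pushout (fun _ : J => tt) W,
      { e : P -> (SA * SB)%type &
        (IsEquiv e
         * (forall w : V, paths (e (po_inr P w)) (wedge_to_prod V w)))%type } }.
Proof.
  exists (W A B SA SB V J). intro P.
  exists (e A B SA SB V J P). split.
  - split.
    + exists (gmap A B SA SB V J P). exact (retr A B SA SB V J P).
    + exists (gmap A B SA SB V J P). exact (sect A B SA SB V J P).
  - exact (e_inr A B SA SB V J P).
Defined.
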